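(* Let $S$ be a compact Riemann surface with an action of a finite group $G$ of geometric signature $(\gamma;[m_1,C_1],\ldots,[m_t,C_t])$, with branch values $q_1,\dots,q_t$ of $\pi_G$ ($q_j$ of type $C_j$), and let $H\le G$. For each $j$ fix a representative $G_j\in C_j$ and a left transversal $\Omega_{G_j}$ of $N_G(G_j)$ in $G$, and partition $\Omega_{G_j}$ into the nonempty classes $L^j_1,\ldots,L^j_{\nu_j}$ of the equivalence relation $l\sim l'\iff |lG_jl^{-1}\cap H|=|l'G_jl'^{-1}\cap H|$; choose $l_k\in L^j_k$. Set $$c^j_k:=|L^j_k|\cdot\frac{[N_G(G_j):G_j]\cdot|l_kG_jl_k^{-1}\cap H|}{|H|}.$$ Then, for each $j$ and $k$, exactly $c^j_k$ of the points of $S/H$ lying over $q_j$ (under the induced map $S/H\to S/G$) are marked with the number $|l_kG_jl_k^{-1}\cap H|$, i.e. their preimages in $S$ have stabilizer in $H$ of that order.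
   Context: $G$ acts faithfully by conformal automorphisms on $S$, with quotient map $\pi_G:S\to S/G$; $\pi_H:S\to S/H$ is the quotient by $H$. For a branch value $q$ of $\pi_G$, the stabilizers in $G$ of the points in $\pi_G^{-1}(q)$ form a complete conjugacy class $C$ of nontrivial cyclic subgroups of $G$, and $q$ is said to be of type $C$. If $q_1,\ldots,q_t$ are all the branch values of $\pi_G$, the geometric signature is $(\gamma;[m_1,C_1],\ldots,[m_t,C_t])$, with $\gamma$ the genus of $S/G$, $C_j$ the type of $q_j$, $m_j$ the order of the subgroups in $C_j$. A point of $S/H$ lying over a branch value of $\pi_G$ is a marked point of $S/H$, marked with the order of the stabilizer in $H$ of any of its preimages in $S$ (possibly $1$). *)

(* Defs.v *)
From HB Require Import structures.
From mathcomp Require Import all_boot all_order all_algebra all_fingroup.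
From mathcomp Require Import finmap.
Set Implicit Arguments. Unset Strict Implicit. Unset Printing Implicit Defensive.

Definition is_left_action (gT : finGroupType) (G : {group gT}) (T : Type)
    (act : gT -> T -> T) : Prop :=
  (forall x, act 1%g x = x) /\
  (forall a b x, a \in G -> b \in G -> act (a * b)%g x = act a (act b x)).

Definition faithful_action (gT : finGroupType) (G : {group gT}) (T : Type)
    (act : gT -> T -> T) : Prop :=
  forall g, g \in G -> (forall x, act g x = x) -> g = 1%g.

Definition stab_in (gT : finGroupType) (T : eqType) (H : {set gT})
    (act : gT -> T -> T) (y : T) : {set gT} :=
  [set h in H | act h y == y].

Local Open Scope fset_scope.

(* the H-orbit of y, i.e. the point of S/H determined by y *)
Definition Horbit (gT : finGroupType) (T : choiceType) (H : {set gT})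
    (act : gT -> T -> T) (y : T) : {fset T} :=
  [fset act h y | h in H].

(* the points of S/H lying over the point of S/G represented by the G-orbit
   of x0, i.e. the H-orbits contained in the G-orbit of x0 *)
Definition points_over (gT : finGroupType) (T : choiceType) (G H : {set gT})
    (act : gT -> T -> T) (x0 : T) : {fset {fset T}} :=
  [fset Horbit H act (act g x0) | g in G].

(* number of points of S/H over (the G-orbit of) x0 that are marked with the
   number d: the stabilizer in H of (any, equivalently every) preimage has
   order d *)
Definition marked_count (gT : finGroupType) (T : choiceType) (G H : {set gT})
    (act : gT -> T -> T) (x0 : T) (d : nat) : nat :=
  #|` [fset O in points_over G H act x0 |
        all (fun y => #|stab_in H act y| == d) (enum_fset O)] |.

(* Main.v *)
Require Import Defs.
From HB Require Import structures.
From mathcomp Require Import all_boot all_order all_algebra all_fingroup all_solvable.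
From mathcomp Require Import finmap zify.
Set Implicit Arguments. Unset Strict Implicit. Unset Printing Implicit Defensive.
Import GRing.Theory Num.Theory.
Local Open Scope group_scope.
Local Open Scope fset_scope.

Section Aux.
Variables (gT : finGroupType) (G H Gj : {group gT}) (T : choiceType)
  (act : gT -> T -> T) (x0 : T).
Hypothesis hact : is_left_action G act.
Hypothesis HG : H \subset G.
Hypothesis GjG : Gj \subset G.
Hypothesis hstab : forall g, g \in G -> (act g x0 = x0 <-> g \in Gj).

Let f g := #|(Gj :^ g^-1) :&: H|.

Lemma actM a b y : a \in G -> b \in G -> act (a * b) y = act a (act b y).
Proof. by move=> aG bG; case: hact => _ hM; rewrite hM. Qed.

Lemma actVK g y : g \in G -> act g^-1 (act g y) = y.
Proof. by move=> gG; rewrite -actM ?groupV // mulVg; case: hact. Qed.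

Lemma actKV g y : g \in G -> act g (act g^-1 y) = y.
Proof. by move=> gG; rewrite -actM ?groupV // mulgV; case: hact. Qed.

Lemma stabE g : g \in G -> stab_in H act (act g x0) = (Gj :^ g^-1) :&: H.
Proof.
move=> gG; apply/setP => h; rewrite !inE.
case hH: (h \in H); rewrite ?andbF ?andbT //=.
have hG : h \in G := subsetP HG h hH.
rewrite mem_conjgV conjgE.
have e : act (g^-1 * (h * g)) x0 = act g^-1 (act h (act g x0)).
  by rewrite !actM ?groupV ?groupM.
apply/eqP/idP.
- move=> E; apply/(hstab _).1; first by rewrite !groupM ?groupV.
  by rewrite e E actVK.
- move/(hstab _).2 => E; have {}E := E (groupM (groupVr gG) (groupM hG gG)).
  by rewrite -[act h _](actKV _ gG) -e E.
Qed.

Lemma f_Hl h g : h \in H -> f (h * g) = f g.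
Proof.
move=> hH; rewrite /f invMg conjsgM.
by rewrite -[RHS](cardJg _ h^-1) conjIg (conjGid (groupVr hH)).
Qed.

Lemma f_Nr g n : n \in 'N(Gj) -> f (g * n) = f g.
Proof.
move=> nN; rewrite /f invMg conjsgM.
by move/normP: (groupVr nN) => ->.
Qed.


Local Notation Hor y := (Horbit H act y).

Lemma act1 y : act 1 y = y.
Proof. by case: hact. Qed.

Lemma Hor_act h y : h \in H -> Hor (act h y) = Hor y.
Proof.
move=> hH; have hG := subsetP HG h hH.
apply/fsetP => w; apply/imfsetP/imfsetP => /= -[h' h'H ->];
  have h'G := subsetP HG h' h'H.
- exists (h' * h); first by rewrite groupM.
  by rewrite actM.
- exists (h' * h^-1); first by rewrite groupM ?groupV.
  by rewrite actM ?groupV ?actVK.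
Qed.

Lemma mem_Hor y : y \in Hor y.
Proof. by apply/imfsetP; exists 1; rewrite ?group1 ?act1. Qed.

Lemma Hor_eqP g g0 : g \in G -> g0 \in G ->
  Hor (act g x0) = Hor (act g0 x0) <-> g \in (H * (Gj :^ g0^-1)) :* g0.
Proof.
move=> gG g0G; split.
- move=> E; have := mem_Hor (act g x0); rewrite E => /imfsetP /= [h hH e].
  have hG := subsetP HG h hH.
  set k := g0^-1 * (h^-1 * g).
  have kG : k \in G by rewrite !groupM ?groupV.
  have kGj : k \in Gj.
    apply/(hstab kG).1; rewrite /k !actM ?groupV ?groupM //; last by rewrite groupV.
    by rewrite e actVK // actVK.
  rewrite mem_rcoset; apply/mulsgP; exists h (k ^ g0^-1) => //.
    by rewrite memJ_conjg.
  by rewrite conjgE invgK /k !mulgA mulgK mulgV mul1g.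
- rewrite mem_rcoset => /mulsgP [h k' hH k'J e].
  have hG := subsetP HG h hH.
  set k := k' ^ g0.
  have kGj : k \in Gj by rewrite /k -mem_conjgV.
  have kG := subsetP GjG k kGj.
  have ge : g = h * (g0 * k).
    by rewrite /k conjgE !mulgA mulgK -e mulgKV.
  have -> : act g x0 = act h (act g0 x0).
    by rewrite ge (actM x0 hG (groupM g0G kG)) (actM x0 g0G kG) (proj2 (hstab kG) kGj).
  by rewrite Hor_act.
Qed.


Lemma f_Hor x g0 : x \in G -> g0 \in G ->
  Hor (act x x0) = Hor (act g0 x0) -> f x = f g0.
Proof.
move=> xG g0G E; have := mem_Hor (act x x0); rewrite E => /imfsetP /= [h hH e].
have hG := subsetP HG h hH.
rewrite /f -(stabE xG) e -actM // stabE ?groupM //.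
exact: (f_Hl g0 hH).
Qed.

Lemma all_Hor d g : g \in G ->
  all (fun y => #|stab_in H act y| == d) (enum_fset (Hor (act g x0))) = (f g == d).
Proof.
move=> gG; apply/allP/eqP.
- by move=> /(_ (act g x0) (mem_Hor _)) /eqP; rewrite stabE.
- move=> fd y /imfsetP /= [h hH ->]; have hG := subsetP HG h hH.
  by rewrite -actM // (stabE (groupM hG gG)) -fd; apply/eqP; exact: (f_Hl g hH).
Qed.

Lemma marked_eq d :
  [fset O in points_over G H act x0 |
     all (fun y => #|stab_in H act y| == d) (enum_fset O)]
  = [fset Hor (act g x0) | g in [set g in G | f g == d]].
Proof.
apply/fsetP => O; rewrite !inE; apply/andP/imfsetP.
- case=> /imfsetP /= [g gG ->] hall; exists g => //.
  by rewrite inE gG /= -all_Hor.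
- case=> g /=; rewrite inE => /andP [gG fd] ->; split.
    by apply/imfsetP; exists g.
  by rewrite all_Hor.
Qed.

Lemma fiber_card d g0 : g0 \in [set g in G | f g == d] ->
  (d * #|[set g | (g \in [set g in G | f g == d]) &&
                 (Hor (act g x0) == Hor (act g0 x0))]| = #|H| * #|Gj|)%N.
Proof.
rewrite inE => /andP [g0G /eqP fd].
have -> : [set g | (g \in [set g in G | f g == d]) &&
                 (Hor (act g x0) == Hor (act g0 x0))] = (H * (Gj :^ g0^-1)) :* g0.
  apply/setP => x; rewrite !inE; apply/idP/idP.
  - case/andP => /andP [xG _] /eqP E; exact/(Hor_eqP xG g0G).1.
  - move=> xB; have xG : x \in G.
      move: (xB); rewrite mem_rcoset => /mulsgP [h k hH kJ e].
      have kG : k \in G.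
        by move: kJ; rewrite mem_conjgV => /(subsetP GjG); rewrite groupJr.
      have := groupM (subsetP HG h hH) kG; rewrite -e => H'.
      by rewrite groupMr ?groupV in H'.
    have E := (Hor_eqP xG g0G).2 xB.
    by rewrite xG /= E eqxx andbT (f_Hor xG g0G E) fd.
rewrite card_rcoset -fd /f setIC -(cardJg Gj g0^-1).
by rewrite (mul_cardG H (Gj :^ g0^-1)%G) mulnC.
Qed.

Lemma card_marked d : (d * #|[set g in G | f g == d]| =
  #|` [fset Hor (act g x0) | g in [set g in G | f g == d]]| * (#|H| * #|Gj|))%N.
Proof.
set A := [set g in G | f g == d].
set M := [fset Hor (act g x0) | g in A].
have -> : #|A| = (\sum_(O <- M) #|[set g | (g \in A) && (Hor (act g x0) == O)]|)%N.
  rewrite -sum1_card.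
  transitivity (\sum_(g in A) \sum_(O <- M) (if Hor (act g x0) == O then 1 else 0))%N.
    apply: eq_bigr => g gA; rewrite -big_mkcond sum1_count /=.
    rewrite (@eq_count _ _ (pred1 (Hor (act g x0)))) => [|O]; last by rewrite /= eq_sym.
    rewrite count_uniq_mem ?fset_uniq //.
    have gM : Hor (act g x0) \in M by apply/imfsetP; exists g.
    by move: gM => ->.
  rewrite exchange_big; apply: eq_bigr => O _.
  by rewrite -big_mkcondr sum1dep_card.
rewrite big_distrr /= (eq_big_seq (fun _ => #|H| * #|Gj|)%N).
  by rewrite big_const_seq count_predT iter_addn_0 mulnC.
move=> O /imfsetP [g0 g0A ->]; exact: fiber_card.
Qed.

Lemma card_A d (Omega : {set gT}) :
  is_transversal Omega (lcosets 'N_G(Gj) G) G ->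
  #|[set g in G | f g == d]| =
    (#|[set l' in Omega | #|(Gj :^ l'^-1) :&: H| == d]| * #|'N_G(Gj)|)%N.
Proof.
case/and3P => _ OG /forall_inP Ot.
set N := 'N_G(Gj); set A := [set g in G | f g == d].
have one g : g \in G ->
    (\sum_(x in Omega) (if g \in x *: N then 1 else 0))%N = 1%N.
  move=> gG; rewrite -big_mkcondr sum1dep_card.
  have -> : [set x | (x \in Omega) && (g \in x *: N)] = Omega :&: (g *: N).
    apply/setP => x; rewrite !inE !mem_lcoset.
    by rewrite -(groupV N (x^-1 * g)) invMg invgK.
  apply/eqP; apply: Ot; rewrite mem_lcosets; apply/mulsgP.
  by exists g 1; rewrite ?group1 ?mulg1.
rewrite -[#|A|]sum1_card.
transitivity (\sum_(g in A) \sum_(x in Omega) (if g \in x *: N then 1 else 0))%N.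
  by apply: eq_bigr => g; rewrite inE => /andP [gG _]; rewrite one.
rewrite exchange_big /=.
transitivity (\sum_(x in Omega) if f x == d then #|N| else 0)%N.
  apply: eq_bigr => x xO; have xG := subsetP OG x xO.
  rewrite -big_mkcondr sum1dep_card.
  have key g : g \in x *: N -> (g \in G) /\ f g = f x.
    rewrite mem_lcoset => nN; have gE : g = x * (x^-1 * g) by rewrite mulKVg.
    case/setIP: nN => nG nNorm.
    by rewrite gE groupM //; split=> //; apply: f_Nr.
  case: ifP => fx.
  - have -> : [set g | (g \in A) && (g \in x *: N)] = x *: N.
      apply/setP => g; rewrite !inE; apply/andP/idP => [[]//|gxN]; split=> //.
      by case: (key g gxN) => -> ->.
    by rewrite card_lcoset.
  - apply/eqP; rewrite cards_eq0; apply/eqP/setP => g; rewrite !inE.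
    apply/negbTE/negP => /andP [/andP [gG fg] gxN].
    by case: (key g gxN) => _ fgx; rewrite -fgx fg in fx.
rewrite -big_mkcondr (eq_bigr (fun _ => 1 * #|N|)%N) => [|x _]; last by rewrite mul1n.
by rewrite -big_distrl sum1dep_card.
Qed.

End Aux.

Theorem proposition3p5 (gT : finGroupType) (G H Gj : {group gT})
    (T : choiceType) (act : gT -> T -> T) (x0 : T) (Omega : {set gT}) (l : gT) :
  is_left_action G act ->
  faithful_action G act ->
  H \subset G ->
  (* x0 lies over the branch value q_j, of type C_j = class of Gj *)
  Gj \subset G -> cyclic Gj -> Gj :!=: 1%g ->
  (forall g, g \in G -> (act g x0 = x0 <-> g \in Gj)) ->
  (* Omega is a left transversal of N_G(Gj) in G *)
  is_transversal Omega (lcosets 'N_G(Gj) G) G ->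
  (* l = l_k is a chosen element of the class L^j_k *)
  l \in Omega ->
  let d := #|(Gj :^ l^-1)%g :&: H| in
  let L := [set l' in Omega | #|(Gj :^ l'^-1)%g :&: H| == d] in
  ((marked_count G H act x0 d)%:R : rat) =
    (#|L|%:R * (#|'N_G(Gj) : Gj|)%g%:R * d%:R / #|H|%:R)%R.
Proof.
move=> hact _ HG GjG _ _ hstab htr _ d L.
rewrite /marked_count (marked_eq hact HG hstab d).
have c1 := card_marked hact HG GjG hstab d.
have c2 := card_A H d htr.
rewrite c2 in c1.
have lag : (#|Gj| * #|'N_G(Gj) : Gj| = #|'N_G(Gj)|)%N.
  by apply: Lagrange; rewrite subsetI GjG normG.
set m := #|` _| in c1 *.
have Heq : (#|L| * #|'N_G(Gj) : Gj| * d = m * #|H|)%N.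
  apply/eqP; rewrite -(eqn_pmul2r (cardG_gt0 Gj)); apply/eqP.
  rewrite -[in RHS]mulnA -c1 -lag /L; lia.
have Hn : ((#|H|%:R : rat) != 0)%R by rewrite pnatr_eq0 -lt0n cardG_gt0.
by rewrite -!natrM Heq natrM mulfK.
Qed.
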